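(* For $n\geq5$, \[\frac{\lceil (n-1)/2\rceil - \lfloor (n-1)/2\rfloor}{\lceil (n-1)/2\rceil} + \frac{\lfloor (n+1)/2\rfloor}{\lceil (n+1)/2\rceil}\leq \frac{\ell_{n}(n)}{\ell_{n-1}(n)}\leq \frac{n+1}{n}.\]
   Context: For $0\leq i\leq 2n$, $\ell_i(n)$ denotes the number of vectors in $\{0,1,2\}^n$ whose coordinates sum to $i$. *)

(* Defs.v *)
From HB Require Import structures.
From mathcomp Require Import all_boot all_order all_algebra.
Set Implicit Arguments. Unset Strict Implicit. Unset Printing Implicit Defensive.
Import Order.TTheory GRing.Theory Num.Theory.

Definition ell (i n : nat) : nat :=
  #|[set v : {ffun 'I_n -> 'I_3} | (\sum_(j < n) (v j : nat))%N == i]|.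

Definition floor2 (m : nat) : nat := m./2.
Definition ceil2 (m : nat) : nat := uphalf m.

(* Main.v *)
Require Import Defs.
From HB Require Import structures.
From mathcomp Require Import all_boot all_order all_algebra.
From mathcomp Require Import ring lra.
Import Order.TTheory GRing.Theory Num.Theory.
Local Open Scope ring_scope.

Definition q : {poly rat} := 1 + 'X + 'X^2.
Definition a (n i : nat) : rat := (q ^+ n)`_i.

Lemma ellE i n : (ell i n)%:R = a n i.
Proof.
rewrite /a /ell.
have -> : q = \sum_(k < 3) 'X^k.
  by rewrite !big_ord_recl big_ord0 /= addr0 expr0 expr1 addrA.
have -> : (\sum_(k < 3) 'X^k) ^+ n = \prod_(j < n) \sum_(k < 3) ('X^k : {poly rat}).
  by rewrite prodr_const card_ord.
rewrite bigA_distr_bigA /= coef_sum.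
under eq_bigr => v _ do rewrite prodrXr coefXn.
rewrite -sum1_card natr_sum big_mkcond /=.
apply: eq_bigr => v _; rewrite inE eq_sym; by case: (_ == _).
Qed.

Lemma coefMq p i : (p * q)`_i.+2 = p`_i.+2 + p`_i.+1 + p`_i.
Proof.
by rewrite /q !mulrDr mulr1 expr2 mulrA !coefD !coefMX /=.
Qed.

Lemma pascal n i : a n.+1 i.+2 = a n i.+2 + a n i.+1 + a n i.
Proof. by rewrite /a exprSr coefMq. Qed.

Lemma a0 i : a 0 i = (i == 0%N)%:R.
Proof. by rewrite /a expr0 coef1. Qed.

Lemma an0 n : a n 0 = 1.
Proof.
elim: n => [|n IH]; first by rewrite a0.
by rewrite /a exprSr /q !mulrDr mulr1 expr2 mulrA !coefD !coefMX /= -/(a n 0) IH !addr0.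
Qed.

Lemma an1 n : a n.+1 1 = a n 1 + a n 0.
Proof.
by rewrite /a exprSr /q !mulrDr mulr1 expr2 mulrA !coefD !coefMX /= addr0.
Qed.

Lemma rowid n j :
  (j+3)%:R * a n j.+3 + (j+2)%:R * a n j.+2 + (j+1)%:R * a n j.+1
  = n%:R * a n j.+2 + (2 * n)%:R * a n j.+1.
Proof.
have H : (q ^+ n)^`() * q = (q ^+ n) * (q^`()) *+ n.
  rewrite deriv_exp; case: n => [|n]; first by rewrite !mulr0n mul0r.
  by rewrite mulrnAl -mulrA -exprSr [q^`() * _]mulrC.
have := congr1 (fun p : {poly rat} => p`_j.+2) H.
rewrite /= coefMq !coef_deriv coefMn.
have -> : q^`() = 1 + 'X *+ 2.
  by rewrite /q !derivD derivC derivX derivXn /= add0r expr1.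
rewrite mulrDr mulr1 coefD mulrnAr coefMn coefMX /= /a => E.
rewrite !mulr_natl !addn3 !addn2 !addn1 E mulrnDl -mulrnA mulnC.
done.
Qed.

Lemma a_ge0 n i : 0 <= a n i.
Proof. by rewrite -ellE ler0n. Qed.

Lemma a32 : a 3 2 = 6.
Proof. rewrite !pascal !an1 !an0 !a0 /=; lra. Qed.
Lemma a33 : a 3 3 = 7.
Proof. rewrite !pascal !an1 !an0 !a0 /=; lra. Qed.

Lemma step m :
  let T := a m.+3 m.+3 in let L := a m.+3 m.+2 in
  a m.+4 m.+4 = T + 2 * L /\ (m+5)%:R * a m.+4 m.+3 = (2 * m + 8)%:R * T + (m+4)%:R * L.
Proof.
move=> T L.
have h1 := rowid m.+3 m.+1. have h2 := rowid m.+3 m.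
rewrite (pascal m.+3 m.+2) (pascal m.+3 m.+1).
have hy : a m.+3 m.+4 = L.
  move: h1; rewrite /L !natrD !natrM !mulrS !mulr0n => h1.
  have hm : (m%:R : rat) >= 0 by rewrite ler0n.
  nra.
rewrite hy /L /T; split; first ring.
move: h2; rewrite /T /L !natrD !natrM !mulrS !mulr0n => h2.
rewrite ?natrD ?natrM ?mulrS ?mulr0n.
have hm : (m%:R : rat) >= 0 by rewrite ler0n.
nra.
Qed.

Lemma invar m :
  0 < a m.+3 m.+2 /\ a m.+3 m.+2 <= a m.+3 m.+3 /\ (m+3)%:R * a m.+3 m.+3 <= (m+4)%:R * a m.+3 m.+2.
Proof.
elim: m => [|m [IH1 [IH2 IH3]]].
  by rewrite a32 a33 /=; split; [|split]; lra.
have [E1 E2] := step m.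
have hm : (m%:R : rat) >= 0 by rewrite ler0n.
move: IH3 E2; rewrite ?natrD ?mulrS ?mulr0n => IH3 E2.
rewrite E1 ?natrD ?mulrS ?mulr0n.
move: E2; rewrite ?natrM ?mulrS ?mulr0n.
set T := a m.+3 m.+3; set L := a m.+3 m.+2; set L' := a m.+4 m.+3 => E2.
move: IH1 IH2 IH3; rewrite -/T -/L => IH1 IH2 IH3.
set M := (m%:R : rat) in hm IH3 E2 *.
have hM : 0 < M + 5 by lra.
have hML : 0 <= M * L by rewrite mulr_ge0 // ltW.
have hMT : M * L <= M * T by rewrite ler_wpM2l.
split; [|split].
- rewrite -(pmulr_rgt0 _ hM). lra.
- rewrite -(ler_pM2l hM). lra.
- lra.
Qed.

Lemma even_ineq (J T L Tn Ln : rat) : 1 <= J -> 0 < L -> 0 <= T ->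
  (2*J+3) * T <= (2*J+4) * L ->
  Tn = T + 2 * L -> (2*J+5) * Ln = (4*J+8) * T + (2*J+4) * L ->
  (J^2+5*J+7) * Ln <= (J+2)*(J+3) * Tn.
Proof.
move=> hJ hL hT h E1 E2.
have h5 : 0 < 2*J+5 by lra.
rewrite -(ler_pM2l h5).
have -> : (2 * J + 5) * ((J ^ 2 + 5 * J + 7) * Ln) = (J ^ 2 + 5 * J + 7) * ((2*J+5) * Ln) by ring.
rewrite E2 E1.
set D := (2*J^2+12*J+16)*L - (2*J^2+9*J+13)*T.
have hD : 0 <= (2*J+3) * D.
  have c : 0 <= 2*J^2+9*J+13 by nra.
  have h1 := ler_wpM2l c h.
  have h2 : 0 <= (4*J^2+6*J-4)*L by apply: mulr_ge0; nra.
  rewrite /D. nra.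
have hD' : 0 <= D.
  by rewrite -(pmulr_rge0 _ (_ : 0 < 2*J+3)) //; lra.
have : 0 <= (2*J+5)*(J+2)*D by apply: mulr_ge0 => //; nra.
rewrite /D. nra.
Qed.

Lemma divle (x b c d : rat) : 0 < b -> 0 < d -> x * d <= c * b -> x / b <= c / d.
Proof.
move=> hb hd h. rewrite ler_pdivrMr // mulrAC ler_pdivlMr //.
Qed.

Lemma facts n : (3 <= n)%N ->
  0 < a n n.-1 /\ a n n.-1 <= a n n /\ n%:R * a n n <= (n+1)%:R * a n n.-1.
Proof.
case: n => [|[|[|m]]] // _.
have [hL [hLT hTL]] := invar m.
split => //; split => //.
move: hTL; rewrite ?natrD ?mulrS ?mulr0n /=. rewrite ?natrD ?mulrS ?mulr0n. lra.
Qed.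

Lemma step2 m : (m%:R+5) * a m.+4 m.+3 = (2 * m%:R + 8)*a m.+3 m.+3 + (m%:R+4)*a m.+3 m.+2 :> rat.
Proof. have [_ E2] := step m. move: E2; rewrite !natrD => ->; ring. Qed.

Lemma step1 m : a m.+4 m.+4 = a m.+3 m.+3 + 2 * a m.+3 m.+2.
Proof. by have [E1 _] := step m. Qed.

Lemma invar2 m : (m%:R+3) * a m.+3 m.+3 <= (m%:R+4)*a m.+3 m.+2 :> rat.
Proof. have [_ [_ h]] := invar m. by move: h; rewrite !natrD. Qed.

Lemma even_case i :
  1 / (i.+3)%:R + (i.+3)%:R / (i.+4)%:R <= a (i.*2.+2).+4 (i.*2.+2).+4 / a (i.*2.+2).+4 (i.*2.+2).+3.
Proof.
have [hL [hLT _]] := invar (i.*2.+2).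
have E1 := step1 (i.*2.+2).
have E2 := step2 (i.*2.+2).
have hTL := invar2 (i.*2.+2).
have hM : (i.*2.+2)%:R = 2 * i%:R + 2 :> rat.
  by rewrite -addnn -addn2 !natrD mulr2n mulrDl mul1r.
have h3 : (i.+3)%:R = i%:R + 3 :> rat by rewrite -addn3 natrD.
have h4 : (i.+4)%:R = i%:R + 4 :> rat by rewrite -addn4 natrD.
rewrite hM in E2 hTL. rewrite h3 h4.
move: E1 E2 hTL hL hLT.
set T := a (i.*2.+2).+3 (i.*2.+2).+3.
set L := a (i.*2.+2).+3 (i.*2.+2).+2.
set Tn := a (i.*2.+2).+4 (i.*2.+2).+4.
set Ln := a (i.*2.+2).+4 (i.*2.+2).+3.
set J := (i%:R : rat).
move=> E1 E2 hTL hL hLT.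
have hJ : 0 <= J by rewrite ler0n.
have hLn : 0 < Ln.
  have h7 : 0 < 2 * J + 2 + 5 by lra.
  rewrite -(pmulr_rgt0 _ h7) E2. nra.
have H := even_ineq (J + 1) T L Tn Ln.
have H' : ((J+1)^2 + 5*(J+1) + 7) * Ln <= (J+1+2)*(J+1+3) * Tn.
  apply: H => //; try lra.
rewrite ler_pdivlMr //.
have -> : 1 / (J + 3) + (J + 3) / (J + 4) = ((J+1)^2 + 5*(J+1) + 7) / ((J+1+2)*(J+1+3)).
  have hi : (0:rat) <= i%:R by apply: ler0n.
  field. apply/andP; split; apply: lt0r_neq0; lra.
rewrite mulrAC ler_pdivrMr; last by nra.
by rewrite [Tn * _]mulrC.
Qed.

Theorem mainTheorem17 (n : nat) (hn : (5 <= n)%N) :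
  ((ceil2 (n - 1))%:R - (floor2 (n - 1))%:R) / (ceil2 (n - 1))%:R
    + (floor2 (n + 1))%:R / (ceil2 (n + 1))%:R
    <= (ell n n)%:R / (ell (n - 1) n)%:R :> rat
  /\ (ell n n)%:R / (ell (n - 1) n)%:R <= (n + 1)%:R / n%:R :> rat.
Proof.
have [hL [hLT hTL]] := facts n (ltnW (ltnW hn)).
rewrite !ellE subn1.
split; last first.
  apply: divle => //; first by rewrite ltr0n; apply: leq_trans hn.
  by rewrite mulrC.
have [k [Hk|Hk]] : exists k, n = k.*2 \/ n = k.*2.+1.
  exists n./2; rewrite -{1 3}(odd_double_half n); case: (odd n); [right|left]; by [].
- subst n. case: k hn hL hLT hTL => [|[|[|i]]] //; rewrite ?doubleS => hn hL hLT hTL.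
  rewrite addn1 /floor2 /ceil2 /= doubleK uphalf_double.
  have -> : ((i.+3)%:R - (i.+2)%:R : rat) = 1.
    by rewrite !mulrS; ring.
  exact (even_case i).
- subst n. case: k hn hL hLT hTL => [|[|i]] //; rewrite ?doubleS => hn hL hLT hTL.
  rewrite addn1 /floor2 /ceil2 /= doubleK uphalf_double subrr mul0r add0r.
  rewrite divff ?pnatr_eq0 // ler_pdivlMr // mul1r.
  exact hLT.
Qed.
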